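(* Let $s\ge 1$ be an integer and let $D$ be a normalized difference set in an abelian group $G$ with parameters \[ (v,k,\lambda)=\left((2^s+1)(2^{2s}+1),\,2^{2s}+2^s+1,\,2^s+1\right). \] Let $H$ and $K$ be the subgroups of $G$ of orders $2^s+1$ and $2^{2s}+1$ respectively, so that $G=HK$ is their direct product. Then $H\subseteq D$ and $|D\cap Hx|=1$ for each coset $Hx\neq H$ of $H$. Furthermore $D\cap K=\{1\}$ and $|D\cap Kx|=2^s+1$ for each coset $Kx\neq K$ of $K$.
   Context: A $(v,k,\lambda)$-difference set in an abelian group $G$ of order $v$ is a $k$-subset $D$ such that every non-identity element of $G$ is of the form $d_1d_2^{-1}$ with $d_1,d_2\in D$ in exactly $\lambda$ ways. It is normalized if $\prod_{d\in D}d=1$. *)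

(* Defs.v *)
From mathcomp Require Import all_boot all_fingroup.
Set Implicit Arguments. Unset Strict Implicit. Unset Printing Implicit Defensive.
Local Open Scope group_scope.

Definition difference_set (gT : finGroupType) (G : {set gT}) (D : {set gT})
    (v k lam : nat) : Prop :=
  [/\ #|G| = v, D \subset G, #|D| = k &
      forall g, g \in G -> g != 1 ->
        #|[set p in setX D D | p.1 * p.2^-1 == g]| = lam].

Definition normalized (gT : finGroupType) (D : {set gT}) : Prop :=
  \prod_(d in D) d = 1.

(* Main.v *)
From HB Require Import structures.
Require Import Defs.
From mathcomp Require Import all_boot all_fingroup all_solvable all_algebra.
From mathcomp Require Import zify ring lra.
Set Implicit Arguments. Unset Strict Implicit. Unset Printing Implicit Defensive.
Import GRing.Theory Num.Theory.
Local Open Scope ring_scope.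

Definition cv (gT : finGroupType) (A : {set gT}) (R : pzRingType) (f g : gT -> R) (z : gT) : R :=
  \sum_(y in A) f y * g (y^-1 * z)%g.

Definition Mx (gT : finGroupType) (A : {set gT}) (R : pzRingType) (f : gT -> R) : 'M[R]_#|A| :=
  \matrix_(i, j) f ((enum_val i)^-1 * enum_val j)%g.

Lemma sum_shift (gT : finGroupType) (A : {group gT}) (R : pzRingType) (F : gT -> R) a :
  a \in A -> \sum_(x in A) F x = \sum_(y in A) F (a * y)%g.
Proof.
move=> aA; rewrite (reindex_inj (mulgI a)) /=.
by apply: eq_bigl => y; rewrite groupMl.
Qed.

Lemma MxM (gT : finGroupType) (A : {group gT}) (R : pzRingType) (f g : gT -> R) :
  Mx A f *m Mx A g = Mx A (cv A f g).
Proof.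
apply/matrixP => i j; rewrite !mxE /cv.
rewrite (eq_bigr (fun k => f ((enum_val i)^-1 * enum_val k)%g * g ((enum_val k)^-1 * enum_val j)%g));
  last by move=> k _; rewrite !mxE.
rewrite -(big_enum_val (fun x => f ((enum_val i)^-1 * x)%g * g (x^-1 * enum_val j)%g)).
rewrite (sum_shift _ (enum_valP i)); apply: eq_bigr => y _.
by rewrite mulKg invMg mulgA.
Qed.

Lemma Mx_eq (gT : finGroupType) (A : {group gT}) (R : pzRingType) (f g : gT -> R) :
  {in A, f =1 g} -> Mx A f = Mx A g.
Proof.
move=> fg; apply/matrixP => i j; rewrite !mxE fg //.
by rewrite groupM ?groupV ?enum_valP.
Qed.

Lemma Mx0 (gT : finGroupType) (A : {group gT}) (R : pzRingType) (f : gT -> R) :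
  Mx A f = 0 -> {in A, forall x, f x = 0}.
Proof.
move=> M0 x xA.
have := congr1 (fun M : 'M[R]_#|A| => M (enum_rank_in (group1 A) 1%g) (enum_rank_in (group1 A) x)) M0.
by rewrite !mxE !enum_rankK_in ?group1 // invg1 mul1g.
Qed.
Lemma cop1 (gT : finGroupType) (A : {group gT}) x m :
  x \in A -> (x ^+ m = 1)%g -> coprime m #|A| -> x = 1%g.
Proof.
move=> xA e cm.
have d1 : (#[x]%g %| m)%N by rewrite order_dvdn e.
have d2 : (#[x]%g %| #|A|)%N by apply: order_dvdG.
have : (#[x]%g %| gcdn m #|A|)%N by rewrite dvdn_gcd d1 d2.
by rewrite (eqP cm) dvdn1 order_eq1 => /eqP.
Qed.

Lemma sq_inj (gT : finGroupType) (A : {group gT}) y z :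
  abelian A -> odd #|A| -> y \in A -> z \in A -> (y ^+ 2 = z ^+ 2)%g -> y = z.
Proof.
move=> abA oA yA zA e.
have c : commute y z^-1 by apply: (centsP abA); rewrite ?groupV.
have h : ((y * z^-1) ^+ 2 = 1)%g by rewrite expgMn // e expgVn mulgV.
have yzA : (y * z^-1 \in A)%g by rewrite groupM ?groupV.
have := @cop1 _ A _ 2 yzA h.
rewrite coprime_sym coprimen2 oA => /(_ isT) e1.
by rewrite -(mulgKV z y) e1 mul1g.
Qed.

Lemma sq_conv (gT : finGroupType) (A : {group gT}) (R : comPzRingType) (f : gT -> R) z :
  2%:R = 0 :> R -> (forall x : R, x * x = x) ->
  abelian A -> odd #|A| -> z \in A ->
  \sum_(y in A) f y * f (y^-1 * z ^+ 2)%g = f z.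
Proof.
move=> two0 idem abA oA zA.
set c := (z ^+ 2)%g.
have cA : c \in A by rewrite groupX.
pose io y := if y \in A then (y^-1 * c)%g else y.
have ioA y : (io y \in A) = (y \in A).
  by rewrite /io; case: ifP => // yA; rewrite groupM ?groupV ?yA.
have ioK : involutive io.
  move=> y; case yA: (y \in A); last by rewrite /io yA yA.
  have e : io y = (y^-1 * c)%g by rewrite /io yA.
  rewrite e /io groupM ?groupV ?yA // invMg invgK.
  have cy : commute y c by apply: (centsP abA).
  by rewrite -mulgA cy mulKg.
have ioinj : injective io := inv_inj ioK.
have ioz : io z = z by rewrite /io zA /c expgS mulKg expg1.
rewrite (bigD1 z) //= {1}/c expgS mulKg idem.
pose F y := f y * f (io y).
have Fio : forall y, F (io y) = F y by move=> y; rewrite /F ioK mulrC.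
rewrite (eq_bigr F); last by move=> y /andP[yA _]; rewrite /F /io yA.
pose r (y : gT) := nat_of_ord (enum_rank y).
rewrite (bigID (fun y => r y < r (io y))%N) /=.
set S1 := \sum_(i | _) _; set S2 := \sum_(i | _) _.
have -> : S2 = S1.
  rewrite /S2 (reindex_inj ioinj) /=; apply: eq_big => y.
    rewrite ioK ioA; have [yA|] //= := boolP (y \in A).
    have [->|yz] := eqVneq y z.
      by rewrite ioz eqxx.
    have iz : io y != z.
      by apply: contraNneq yz => e; rewrite -(ioK y) e ioz.
    have iy : r y != r (io y).
      apply: contraNneq yz => /val_inj /enum_rank_inj e.
      apply/eqP; apply: (sq_inj abA oA yA zA); rewrite expgS expg1.
      have : (y * io y = y * y)%g by rewrite -e.
      by rewrite /io yA mulKVg => <-.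
    by rewrite iz /= -leqNgt leq_eqVlt (negbTE iy).
  by rewrite ?Fio.
by rewrite -mulr2n -mulr_natr two0 mulr0 addr0.
Qed.

Definition fp (gT : finGroupType) (A : {set gT}) (R : pzRingType) j (f : gT -> R) :=
  iter j (fun g => cv A g g) f.

Lemma fpE (gT : finGroupType) (A : {group gT}) (R : comPzRingType) (X : gT -> R) j :
  2%:R = 0 :> R -> (forall x : R, x * x = x) -> abelian A -> odd #|A| ->
  {in A, forall z, fp A j X (z ^+ (2 ^ j))%g = X z}.
Proof.
move=> two0 idem abA oA; elim: j => [|j IH] z zA; first by rewrite expg1.
rewrite /fp iterS -/(fp A j X) expnSr expgM /cv sq_conv ?groupX //.
by rewrite IH.
Qed.

Lemma MxP (gT : finGroupType) (A : {group gT}) (R : pzRingType) (X : gT -> R) j :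
  Mx A X ^+ (2 ^ j) = Mx A (fp A j X).
Proof.
elim: j => [|j IH]; first by rewrite expr1.
by rewrite expnSr exprM IH expr2 -mulmxE MxM.
Qed.

Lemma frob_zero (gT : finGroupType) (A : {group gT}) (R : comPzRingType) (X : gT -> R) t :
  2%:R = 0 :> R -> (forall x : R, x * x = x) -> abelian A -> odd #|A| -> (0 < t)%N ->
  {in A, forall g, (g ^+ (2 ^ t) = g^-1)%g} ->
  {in A, forall z, \sum_(x in A) X x * X (x * z)%g = 0} ->
  {in A, forall x, X x = 0}.
Proof.
move=> two0 idem abA oA t0 inv2 hyp.
set P := Mx A X; set Q := Mx A (fun y => X y^-1%g).
have PQ : P * Q = 0.
  rewrite -mulmxE MxM; apply/matrixP => i j; rewrite !mxE /cv.
  set z := ((enum_val i)^-1 * enum_val j)%g.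
  have zA : z \in A by rewrite groupM ?groupV ?enum_valP.
  rewrite -[RHS](hyp z^-1%g) ?groupV //; apply: eq_bigr => y yA.
  rewrite invMg invgK; congr (_ * X _).
  by apply: (centsP abA); rewrite ?groupV.
have Pt : P ^+ (2 ^ t) = Q.
  rewrite MxP; apply: Mx_eq => y yA.
  have e : ((y^-1) ^+ (2 ^ t) = y)%g by rewrite inv2 ?groupV ?invgK.
  by rewrite -{1}e fpE ?groupV.
have P2 : P ^+ (2 ^ (t + t)) = P.
  rewrite MxP; apply: Mx_eq => y yA.
  have e : (y ^+ (2 ^ (t + t)) = y)%g.
    by rewrite expnD expgM (inv2 y yA) expgVn (inv2 y yA) invgK.
  by rewrite -{1}e fpE.
have : P = 0.
  have h : (2 ^ (t + t) = 2 ^ t + (2 ^ (t + t) - 2 ^ t).-1.+1)%N.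
    have lt : (2 ^ t < 2 ^ (t + t))%N by rewrite ltn_exp2l //; lia.
    by rewrite prednK ?subnKC ?subn_gt0 // ltnW.
  rewrite -P2 h exprD Pt exprS mulrA.
  have -> : Q * P = P * Q.
    by rewrite -Pt; apply/esym/commrX.
  by rewrite PQ !mul0r.
by apply: Mx0.
Qed.
Lemma F2nat n : ((n%:R : 'F_2) == 0) = (2 %| n)%N.
Proof.
apply/eqP/idP => [h|h].
  have := val_Fp_nat (isT : prime 2) n; rewrite h /= => e.
  by rewrite /dvdn -e.
by rewrite -Fp_nat_mod //; move/eqP: h => ->.
Qed.

Lemma F2z (m : int) : ((m%:~R : 'F_2) == 0) = (2 %| m)%Z.
Proof.
case: m => n.
  by rewrite -[Posz n]/(n%:Z) pmulrn F2nat dvdzE.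
by rewrite NegzE mulrNz oppr_eq0 -pmulrn F2nat dvdzE /= ?abszN.
Qed.

Lemma F2two : 2%:R = 0 :> 'F_2.
Proof. by apply/eqP; rewrite F2nat. Qed.

Lemma F2idem (x : 'F_2) : x * x = x.
Proof. by case: x => [[|[|n]] //= Hn]; apply: val_inj. Qed.

Lemma par (gT : finGroupType) (A : {group gT}) (w : gT -> int) t :
  abelian A -> odd #|A| -> (0 < t)%N ->
  {in A, forall g, (g ^+ (2 ^ t) = g^-1)%g} ->
  {in A, forall z, (2 %| \sum_(x in A) w x * w (x * z)%g)%Z} ->
  {in A, forall x, (2 %| w x)%Z}.
Proof.
move=> abA oA t0 inv2 hyp x xA; rewrite -F2z; apply/eqP.
apply: (@frob_zero _ A 'F_2 (fun y => (w y)%:~R) t F2two F2idem abA oA t0 inv2) => // z zA.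
apply/eqP.
have -> : \sum_(x in A) (w x)%:~R * (w (x * z)%g)%:~R = ((\sum_(x in A) w x * w (x * z)%g)%:~R : 'F_2).
  by rewrite rmorph_sum; apply: eq_bigr => y _; rewrite rmorphM.
by rewrite F2z hyp.
Qed.

Lemma div2s (gT : finGroupType) (A : {group gT}) t s : forall (w : gT -> int),
  abelian A -> odd #|A| -> (0 < t)%N ->
  {in A, forall g, (g ^+ (2 ^ t) = g^-1)%g} ->
  {in A, forall z, \sum_(x in A) w x * w (x * z)%g = (z == 1%g)%:R * (2 ^+ s) ^+ 2} ->
  {in A, forall x, (2 ^+ s %| w x)%Z}.
Proof.
elim: s => [|s IH] w abA oA t0 inv2 hyp x xA; first by rewrite expr0 dvd1z.
have p2 : {in A, forall x, (2 %| w x)%Z}.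
  apply: (par abA oA t0 inv2) => z zA; rewrite hyp //.
  apply: dvdz_mull; rewrite expr2; apply: dvdz_mulr; rewrite exprS.
  by apply: dvdz_mulr; apply: dvdzz.
pose w' y := (w y %/ 2)%Z.
have ww : {in A, forall y, w y = w' y * 2}.
  by move=> y yA; rewrite /w' divzK // p2.
have hyp' : {in A, forall z, \sum_(x in A) w' x * w' (x * z)%g = (z == 1%g)%:R * (2 ^+ s) ^+ 2}.
  move=> z zA; apply: (@mulfI _ 4) => //.
  rewrite mulr_sumr.
  have -> : 4 * ((z == 1%g)%:R * (2 ^+ s) ^+ 2) = (z == 1%g)%:R * (2 ^+ s.+1) ^+ 2 :> int.
    by rewrite [2 ^+ s.+1]exprS; set X := 2 ^+ s; set b := (_ == _)%:R; ring.
  rewrite -hyp //; apply: eq_bigr => y yA.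
  rewrite (ww y) // (ww (y * z)%g) ?groupM //; ring.
have := IH w' abA oA t0 inv2 hyp' x xA.
rewrite (ww x) // exprSr => h. by apply: dvdz_mul h (dvdzz 2).
Qed.

Lemma shape (gT : finGroupType) (A : {group gT}) t s (w : gT -> int) :
  abelian A -> odd #|A| -> (0 < t)%N ->
  {in A, forall g, (g ^+ (2 ^ t) = g^-1)%g} ->
  {in A, forall z, \sum_(x in A) w x * w (x * z)%g = (z == 1%g)%:R * (2 ^+ s) ^+ 2} ->
  exists2 y0, y0 \in A & exists2 e : int, (e == 1) || (e == -1) &
     {in A, forall x, w x = if x == y0 then e * 2 ^+ s else 0}.
Proof.
move=> abA oA t0 inv2 hyp.
have dv := div2s abA oA t0 inv2 hyp.
pose u y := (w y %/ 2 ^+ s)%Z.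
have ww : {in A, forall y, w y = u y * 2 ^+ s}.
  by move=> y yA; rewrite /u divzK // dv.
have X0 : 2 ^+ s != 0 :> int by rewrite expf_neq0.
have su : \sum_(x in A) u x * u x = 1.
  apply: (@mulIf _ ((2 ^+ s) ^+ 2)); first by rewrite expf_neq0.
  have h1 := hyp 1%g (group1 A); rewrite eqxx mul1r in h1.
  rewrite mul1r -[X in _ = X]h1 mulr_suml.
  apply: eq_bigr => y yA; rewrite mulg1 (ww y yA); set X := 2 ^+ s; ring.
have [y0 /andP[y0A uy0]|none] := pickP (fun y => (y \in A) && (u y != 0)); last first.
  move: su; rewrite big1 // => y yA; have := none y; rewrite yA /= => /negbFE/eqP ->.
  by rewrite mul0r.
move: su; rewrite (bigD1 y0) //= => su.
have r0 : 0 <= \sum_(i in A | i != y0) u i * u i.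
  by apply: sumr_ge0 => i _; rewrite -expr2 sqr_ge0.
have u1 : 1 <= u y0 * u y0 by clear -uy0; lia.
have rr : \sum_(i in A | i != y0) u i * u i = 0.
  move: su r0 u1; set a := u y0 * u y0; set S := \sum_(i in A | i != y0) _.
  move=> su r0 u1; lia.
have ue : (u y0 == 1) || (u y0 == -1).
  have e1 : u y0 * u y0 = 1 by move: su; rewrite rr addr0.
  by rewrite -sqrf_eq1 expr2 e1.
exists y0 => //; exists (u y0) => // x xA.
rewrite (ww x xA); case: eqP => [->|nx] //.
move/eqP: rr; rewrite psumr_eq0; last by move=> i _; rewrite -expr2 sqr_ge0.
move/allP/(_ x); rewrite mem_index_enum xA /= => /(_ isT).
have -> : (x != y0) by apply/eqP.
by rewrite /= mulf_eq0 orbb => /eqP ->; rewrite mul0r.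
Qed.

Local Close Scope ring_scope.
Local Open Scope group_scope.
Lemma sum_eq1 (T : finType) (S : {pred T}) x : (\sum_(g in S) (x == g) = (x \in S))%N.
Proof.
case xS: (x \in S).
  rewrite (bigD1 x) //= eqxx big1 // => g /andP[_ gx].
  by rewrite eq_sym (negbTE gx).
by rewrite big1 // => g gS; case: eqP => // e; rewrite e gS in xS.
Qed.

Lemma card_sum (T : finType) (D B : {set T}) : #|D :&: B| = (\sum_(d in D) (d \in B))%N.
Proof.
rewrite -sum1_card (eq_bigl (fun d => (d \in D) && (d \in B))); last by move=> d; rewrite inE.
by rewrite big_mkcondr /=; apply: eq_bigr => d _; case: (d \in B).
Qed.

Lemma coset_uniq (gT : finGroupType) (G L A : {group gT}) x z :
  abelian G -> L \subset G -> A \subset G -> L :&: A = 1 -> L * A = G ->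
  x \in G -> z \in A ->
  exists2 y1, y1 \in A & forall y, y \in A -> (x \in L :* (y * z)) = (y == y1).
Proof.
move=> abG sLG sAG LA1 LAG xG zA.
move: xG; rewrite -LAG => /mulsgP[l y2 lL y2A ->].
exists (y2 * z^-1); first by rewrite groupM ?groupV.
move=> y yA; rewrite mem_rcoset.
apply/idP/eqP => [h|->]; last by rewrite mulgKV mulgK.
have h2 : (y2 * (y * z)^-1) \in L.
  by rewrite -(groupMl _ lL) mulgA.
have : (y2 * (y * z)^-1) \in A by rewrite groupM ?groupV ?groupM.
move/(conj h2)/andP; rewrite -in_setI LA1 inE => /eqP e.
have e2 : y2 = y * z by apply/eqP; rewrite eq_mulgV1 e.
by rewrite e2 mulgK.
Qed.

Definition Mc (gT : finGroupType) (D : {set gT}) g :=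
  (\sum_(e in D) \sum_(d in D) ((e * d^-1)%g == g))%N.

Lemma Mcard (gT : finGroupType) (D : {set gT}) g :
  Mc D g = #|[set p in setX D D | p.1 * p.2^-1 == g]|.
Proof.
rewrite /Mc pair_big /= -sum1_card.
rewrite [RHS](eq_bigl (fun p => ((p.1 \in D) && (p.2 \in D)) && (p.1 * p.2^-1 == g))); last first.
  by move=> p; rewrite !inE.
by rewrite [RHS]big_mkcondr /=; apply: eq_bigr => p _; case: (_ == g).
Qed.

Lemma Mc1 (gT : finGroupType) (D : {set gT}) : Mc D 1 = #|D|.
Proof.
rewrite /Mc -sum1_card; apply: eq_bigr => e eD.
by under eq_bigr do rewrite -eq_mulgV1; rewrite sum_eq1 eD.
Qed.

Lemma sum_a (gT : finGroupType) (G L A : {group gT}) (D : {set gT}) z :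
  abelian G -> L \subset G -> A \subset G -> L :&: A = 1 -> L * A = G ->
  D \subset G -> z \in A ->
  (\sum_(y in A) #|D :&: L :* (y * z)| = #|D|)%N.
Proof.
move=> abG sLG sAG LA1 LAG sDG zA.
under eq_bigr do rewrite card_sum.
rewrite exchange_big /= -sum1_card; apply: eq_bigr => d dD.
have [y1 y1A h] := coset_uniq abG sLG sAG LA1 LAG (subsetP sDG d dD) zA.
rewrite (eq_bigr (fun y => (y1 == y) : nat)); first by rewrite sum_eq1 y1A.
by move=> y yA; rewrite h // eq_sym.
Qed.

Lemma corr (gT : finGroupType) (G L A : {group gT}) (D : {set gT}) z :
  abelian G -> L \subset G -> A \subset G -> L :&: A = 1 -> L * A = G ->
  D \subset G -> z \in A ->
  (\sum_(y in A) #|D :&: L :* (y * z)| * #|D :&: L :* y| =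
   \sum_(g in L :* z) Mc D g)%N.
Proof.
move=> abG sLG sAG LA1 LAG sDG zA.
under eq_bigr do rewrite !card_sum big_distrl /=.
under eq_bigr do under eq_bigr do rewrite big_distrr /=.
rewrite exchange_big /=.
under eq_bigr do rewrite exchange_big /=.
rewrite /Mc [RHS]exchange_big /=; apply: eq_bigr => e eD.
rewrite [RHS]exchange_big /=; apply: eq_bigr => d dD.
have eG := subsetP sDG e eD; have dG := subsetP sDG d dD.
have [y1 y1A h0] := coset_uniq abG sLG sAG LA1 LAG dG (group1 A).
have h y : y \in A -> (d \in L :* y) = (y == y1) by move=> yA; have := h0 y yA; rewrite mulg1.
rewrite (bigD1 y1) //= big1 ?addn0; last first.
  by move=> y /andP[yA ny]; rewrite h // (negbTE ny) muln0.
rewrite h // eqxx muln1 sum_eq1.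
move: (h y1 y1A); rewrite eqxx => dL.
rewrite !mem_rcoset in dL *.
have key : e * d^-1 * z^-1 = e * (y1 * z)^-1 * (d * y1^-1)^-1.
  rewrite !invMg invgK !mulgA mulgKV -!mulgA; congr (e * _).
  have zG : z \in G by apply: (subsetP sAG).
  by apply: (centsP abG); rewrite ?groupV.
have hl : (d * y1^-1)^-1 \in L by rewrite groupV dL.
by rewrite key (groupMr _ hl).
Qed.

Lemma corr_val (gT : finGroupType) (G L A : {group gT}) (D : {set gT}) z lam :
  L \subset G -> A \subset G -> L :&: A = 1 -> z \in A ->
  (forall g, g \in G -> g != 1 -> Mc D g = lam) ->
  (\sum_(g in L :* z) Mc D g =
   if z == 1%g then #|D| + (#|L| - 1) * lam else #|L| * lam)%N.
Proof.
move=> sLG sAG LA1 zA hM.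
have [->|nz] := eqVneq z 1.
  rewrite rcoset1 (bigD1 1) //= Mc1.
  rewrite (eq_bigr (fun _ => lam)); last first.
    by move=> g /andP[gL ng]; rewrite hM // (subsetP sLG).
  rewrite sum_nat_const; congr (_ + _ * _).
  by rewrite (cardD1 1 L) group1 add1n subn1; apply: eq_card => i; rewrite !inE andbC.
rewrite (eq_bigr (fun _ => lam)).
  by rewrite sum_nat_const card_rcoset.
move=> g; rewrite mem_rcoset => gz; apply: hM.
  have zG : z \in G by apply: (subsetP sAG).
  by rewrite -(mulgKV z g) groupM // (subsetP sLG).
apply: contra nz => /eqP g1; move: gz; rewrite g1 mul1g groupV => zL.
have : z \in L :&: A by rewrite inE zL zA.
by rewrite LA1 inE.
Qed.
Definition abmul (gT : finGroupType) (G : {group gT}) (abG : abelian G)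
  (x y : subg_of G) : subg_of G := x * y.

Lemma abmulC gT (G : {group gT}) (abG : abelian G) : commutative (abmul abG).
Proof.
move=> x y; apply: subg_inj; rewrite /abmul /=.
by apply: (centsP abG); apply: subgP.
Qed.
Lemma abmulA gT (G : {group gT}) (abG : abelian G) : associative (abmul abG).
Proof. by move=> x y z; rewrite /abmul mulgA. Qed.
Lemma abmul1 gT (G : {group gT}) (abG : abelian G) : left_id 1 (abmul abG).
Proof. by move=> x; rewrite /abmul mul1g. Qed.

HB.instance Definition _ gT (G : {group gT}) (abG : abelian G) :=
  Monoid.isComLaw.Build (subg_of G) 1 (abmul abG) (@abmulA gT G abG) (@abmulC gT G abG) (@abmul1 gT G abG).

Lemma sgvalX gT (G : {group gT}) (x : subg_of G) n : sgval (x ^+ n) = sgval x ^+ n.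
Proof. by elim: n => [|n IH] //; rewrite !expgS -IH. Qed.

Lemma subgX gT (G : {group gT}) x n : x \in G -> subg G (x ^+ n) = subg G x ^+ n.
Proof. by move=> xG; apply: subg_inj; rewrite sgvalX !subgK ?groupX. Qed.

Lemma abmul_iter gT (G : {group gT}) (abG : abelian G) (x : subg_of G) n :
  iter n (abmul abG x) 1 = x ^+ n.
Proof. by elim: n => [|n IH] //=; rewrite IH /abmul expgS. Qed.

Lemma abmulX gT (G : {group gT}) (abG : abelian G) (x y : subg_of G) n :
  (abmul abG x y) ^+ n = abmul abG (x ^+ n) (y ^+ n).
Proof. by rewrite /abmul expgMn //; apply/esym/(abmulC abG). Qed.

Lemma abmulV gT (G : {group gT}) (abG : abelian G) (x y : subg_of G) :
  (abmul abG x y)^-1 = abmul abG (x^-1) (y^-1).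
Proof. by rewrite /abmul invMg; apply: (abmulC abG). Qed.

Lemma big_abX gT (G : {group gT}) (abG : abelian G) (P : pred gT) (F : gT -> subg_of G) n :
  (\big[abmul abG/1]_(i | P i) F i) ^+ n = \big[abmul abG/1]_(i | P i) (F i ^+ n).
Proof.
by apply: (big_morph (fun x : subg_of G => x ^+ n)) => [x y|]; rewrite ?abmulX ?expg1n.
Qed.

Lemma coset_uniq2 (gT : finGroupType) (G L A : {group gT}) x :
  L :&: A = 1 -> L * A = G -> x \in G ->
  exists2 y1, y1 \in A & forall y, y \in A -> (x \in L :* y) = (y == y1).
Proof.
move=> LA1 LAG; rewrite -LAG => /mulsgP[l y2 lL y2A ->].
exists y2 => // y yA; rewrite mem_rcoset.
apply/idP/eqP => [h|->]; last by rewrite mulgK.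
have h2 : (y2 * y^-1) \in L by rewrite -(groupMl _ lL) mulgA.
have : (y2 * y^-1) \in A by rewrite groupM ?groupV.
move/(conj h2)/andP; rewrite -in_setI LA1 inE => /eqP e.
by apply/eqP; rewrite eq_sym eq_mulgV1 e.
Qed.

Lemma normal_lemma (gT : finGroupType) (G L A : {group gT}) (D : {set gT}) y0 c c' :
  abelian G -> L \subset G -> A \subset G -> L :&: A = 1 -> L * A = G ->
  D \subset G -> \prod_(d in D) d = 1 -> y0 \in A ->
  (forall y, y \in A -> y != y0 -> #|D :&: L :* y| = c) -> #|D :&: L :* y0| = c' ->
  y0 ^+ (#|L| * c' * 2) = y0 ^+ (#|L| * c * 2).
Proof.
move=> abG sLG sAG LA1 LAG sDG prodD y0A ac ac0.
set e := #|L|.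
pose op := abmul abG.
pose sg x := subg G x.
pose kc x := odflt 1 [pick y in A | x \in L :* y].
have kcP x : x \in G -> kc x \in A /\ forall y, y \in A -> (x \in L :* y) = (y == kc x).
  move=> xG; have [y1 y1A h] := coset_uniq2 LA1 LAG xG.
  rewrite /kc; case: pickP => [y /andP[yA xy]|none] /=.
    by rewrite (h y yA) in xy; rewrite (eqP xy).
  by have := none y1; rewrite /= y1A h // eqxx.
have P1 : \big[op/1]_(d in D) sg d = 1.
  apply: subg_inj; transitivity (\prod_(d in D) d); last by rewrite prodD.
  rewrite (big_morph sgval (op2 := op) (id2 := 1) (op1 := mulg) (id1 := 1)) //.
  by apply: eq_bigr => d dD; rewrite subgK // (subsetP sDG).
have P2 : \big[op/1]_(y in A) sg y ^+ e ^+ #|D :&: L :* y| = 1.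
  transitivity ((\big[op/1]_(d in D) sg d) ^+ e); last by rewrite P1 expg1n.
  symmetry; rewrite big_abX.
  rewrite (partition_big kc (fun y => y \in A)); last first.
    by move=> d dD; case: (kcP d (subsetP sDG d dD)).
  apply: eq_bigr => y yA.
  rewrite (eq_bigr (fun _ => sg y ^+ e)); last first.
    move=> d /andP[dD /eqP kd].
    have dG := subsetP sDG d dD.
    have := (kcP d dG).2 y yA; rewrite kd eqxx mem_rcoset => dl.
    have yG := subsetP sAG y yA.
    apply: subg_inj; rewrite !sgvalX /sg !subgK //.
    have cdy : commute d y^-1 by apply: (centsP abG); rewrite ?groupV.
    have : (d * y^-1) ^+ e = 1 by rewrite expg_cardG.
    rewrite expgMn // expgVn => /eqP; rewrite -eq_mulgV1 => /eqP //.
  rewrite big_const abmul_iter; congr (_ ^+ _).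
  apply: eq_card => d; rewrite [RHS]inE.
  change ((d \in D) && (kc d == y) = (d \in D) && (d \in L :* y)).
  case dD: (d \in D) => //=.
  by rewrite (kcP d (subsetP sDG d dD)).2 // eq_sym.
pose Pa := \big[op/1]_(y in A) sg y.
have sgV y : y \in G -> sg y^-1 = (sg y)^-1.
  by move=> yG; apply: subg_inj; rewrite /sg /= !subgK ?groupV.
have Pa2 : Pa ^+ 2 = 1.
  have e1 : Pa = Pa^-1.
    rewrite {1}/Pa (reindex_inj invg_inj) /=.
    rewrite (eq_bigl (fun y => y \in A)); last by move=> y; rewrite groupV.
    rewrite (big_morph (fun x : subg_of G => x^-1) (op2 := op) (id2 := 1) (op1 := op) (id1 := 1)); last 2 first.
    - by move=> x y; rewrite abmulV.
    - by rewrite invg1.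
    by apply: eq_bigr => y yA; rewrite sgV // (subsetP sAG).
  by rewrite expgS expg1 {1}e1 mulVg.
have yy := y0A.
rewrite (bigD1 y0) //= in P2.
pose R := \big[op/1]_(y in A | y != y0) sg y ^+ e ^+ c.
have eR : \big[op/1]_(y in A | y != y0) sg y ^+ e ^+ #|D :&: L :* y| = R.
  by apply: eq_bigr => y /andP[yA ny]; rewrite ac.
rewrite eR ac0 in P2.
have P3 : op (sg y0 ^+ e ^+ c) R = Pa ^+ (e * c).
  by rewrite /Pa big_abX (bigD1 y0) //= expgM; congr op; apply: eq_bigr => y _; rewrite expgM.
have E1 : op (sg y0 ^+ e ^+ c' ^+ 2) (R ^+ 2) = 1.
  by rewrite /op -abmulX P2 expg1n.
have E2 : op (sg y0 ^+ e ^+ c ^+ 2) (R ^+ 2) = 1.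
  by move: P3; rewrite /op => P3; rewrite -abmulX P3 -expgM mulnC expgM Pa2 expg1n.
have : sg y0 ^+ e ^+ c' ^+ 2 = sg y0 ^+ e ^+ c ^+ 2.
  by apply: (mulIg (R ^+ 2)); rewrite -[LHS]/(op _ _) -[RHS]/(op _ _) E1 E2.
move/(congr1 sgval); rewrite !sgvalX /sg subgK ?(subsetP sAG) //.
by move=> h; rewrite !expgM h.
Qed.

Lemma part (gT : finGroupType) (G L A : {group gT}) (D : {set gT}) (lam c t s : nat) (eps : int) :
  abelian G -> L \subset G -> A \subset G -> L :&: A = 1 -> L * A = G -> D \subset G ->
  (forall g, g \in G -> g != 1 -> Mc D g = lam) ->
  odd #|A| -> (0 < t)%N -> {in A, forall g, g ^+ (2 ^ t) = g^-1} ->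
  (Posz #|D| + Posz (#|L| - 1)%N * Posz lam - 2 * Posz c * Posz #|D| + Posz c ^+ 2 * Posz #|A|
     = (2 ^+ s) ^+ 2)%R ->
  (Posz #|L| * Posz lam - 2 * Posz c * Posz #|D| + Posz c ^+ 2 * Posz #|A| = 0)%R ->
  (Posz #|D| - Posz c * Posz #|A| = eps * 2 ^+ s)%R ->
  (eps = 1 \/ eps = -1)%R ->
  exists2 y0, y0 \in A & forall y, y \in A ->
    Posz #|D :&: L :* y| = (Posz c + (y == y0)%:R * eps * 2 ^+ s)%R.
Proof.
move=> abG sLG sAG LA1 LAG sDG hM oA t0 inv2 h1 h2 h3 heps.
have abA : abelian A := abelianS sAG abG.
pose a y := Posz #|D :&: L :* y|.
pose w y := (a y - Posz c)%R.
have sa z : z \in A -> (\sum_(y in A) a (y * z)%g = Posz #|D|)%R.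
  move=> zA; rewrite -(sum_a abG sLG sAG LA1 LAG sDG zA).
  by rewrite (big_morph Posz PoszD (erefl 0%Z)).
have sa1 : (\sum_(y in A) a y = Posz #|D|)%R.
  by rewrite -(sa 1%g (group1 A)); apply: eq_bigr => y _; rewrite mulg1.
have hyp : {in A, forall z, (\sum_(x in A) w x * w (x * z)%g = (z == 1%g)%:R * (2 ^+ s) ^+ 2)%R}.
  move=> z zA.
  rewrite (eq_bigr (fun x => a (x * z)%g * a x - (Posz c * a (x * z)%g + Posz c * a x) + Posz c * Posz c)%R);
    last by move=> x _; rewrite /w; ring.
  rewrite big_split /= sumrB big_split /= -!mulr_sumr sa // sa1 sumr_const.
  have := corr abG sLG sAG LA1 LAG sDG zA; rewrite (corr_val sLG sAG LA1 zA hM) => hc.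
  rewrite /a -!PoszM -(big_morph Posz PoszD (erefl 0%Z)) hc.
  case: eqP => _.
    by rewrite PoszD PoszM mul1r -h1 !PoszM -mulr_natr natz; ring.
  by rewrite PoszM mul0r -h2 !PoszM -mulr_natr natz; ring.
have [y0 y0A [e he ww]] := shape abA oA t0 inv2 hyp.
have ee : e = eps.
  have : (\sum_(x in A) w x = e * 2 ^+ s)%R.
    rewrite (bigD1 y0) //= big1 ?addr0; first by rewrite ww // eqxx.
    by move=> y /andP[yA ny]; rewrite ww // (negbTE ny).
  rewrite /w sumrB sa1 sumr_const -[(Posz c *+ _)%R]mulr_natr natz h3 => hh.
  have X0 : (2 ^+ s != 0 :> int)%R by rewrite expf_neq0.
  have : ((eps - e) * 2 ^+ s = 0)%R by rewrite mulrBl hh; ring.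
  by move/eqP; rewrite mulf_eq0 (negbTE X0) orbF subr_eq0 => /eqP.
exists y0 => // y yA.
move: (ww y yA); rewrite /w /a ee => h.
rewrite -(subrK (Posz c) (Posz #|D :&: L :* y|)) h.
by case: eqP => _ /=; ring.
Qed.

Lemma pow_inv (gT : finGroupType) (A : {group gT}) n :
  #|A| = n.+1 -> {in A, forall g, g ^+ n = g^-1}.
Proof.
move=> cA g gA; have := expg_cardG gA; rewrite cA expgSr => h.
by rewrite -(mulgK g (g ^+ n)) h mul1g.
Qed.

Lemma cancel_pow (gT : finGroupType) (y : gT) m n : y ^+ (m + n) = y ^+ n -> y ^+ m = 1.
Proof. by rewrite expgD => h; apply: (mulIg (y ^+ n)); rewrite h mul1g. Qed.

Theorem corollary5p2 (s : nat) (gT : finGroupType) (G H K : {group gT})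
    (D : {set gT}) :
  1 <= s ->
  abelian G ->
  difference_set G D ((2 ^ s + 1) * (2 ^ (2 * s) + 1))%N
                     (2 ^ (2 * s) + 2 ^ s + 1)%N (2 ^ s + 1)%N ->
  normalized D ->
  H \subset G -> #|H| = (2 ^ s + 1)%N ->
  K \subset G -> #|K| = (2 ^ (2 * s) + 1)%N ->
  [/\ H \subset D,
      (forall x, x \in G -> x \notin H -> #|D :&: (H :* x)| = 1%N),
      D :&: K = [set 1] &
      (forall x, x \in G -> x \notin K -> #|D :&: (K :* x)| = (2 ^ s + 1)%N)].
Proof.
move=> s1 abG [cardG sDG cardD hdiff] normD sHG cH sKG cK.
set q := (2 ^ s)%N in cH cardG cardD hdiff *.
have q2 : (2 ^ (2 * s) = q * q)%N by rewrite mulnC expnM expnS expn1.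
rewrite q2 in cK cardG cardD.
have qe : (2 %| q)%N by rewrite /q -(subnKC s1) expnS dvdn_mulr.
have q1 : (1 < q)%N by rewrite /q -(subnKC s1) expnS; have := expn_gt0 2 (s - 1); lia.
have hM : forall g, g \in G -> g != 1 -> Mc D g = (q + 1)%N.
  by move=> g gG ng; rewrite Mcard hdiff.
have oH : odd #|H| by rewrite cH addn1 /= -dvdn2 qe.
have oK : odd #|K| by rewrite cK addn1 /= -dvdn2 dvdn_mulr.
have cHK : coprime #|H| #|K|.
  rewrite cH cK -coprime_modr.
  have -> : (q * q + 1 = (q - 1) * (q + 1) + 2)%N by rewrite mulnBl mul1n mulnDr muln1; lia.
  rewrite modnMDl modn_small; last lia.
  by rewrite coprimen2 addn1 /= -dvdn2 qe.
have HK1 : H :&: K = 1 := coprime_TIg cHK.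
have KH1 : K :&: H = 1 by rewrite setIC.
have HKG : H * K = G.
  apply/eqP; rewrite eqEcard mul_subG //= cardG.
  have := mul_cardG H K; rewrite HK1 cards1 muln1 cH cK => <-.
  by [].
have KHG : K * H = G.
  apply/eqP; rewrite eqEcard mul_subG //= cardG.
  have := mul_cardG K H; rewrite KH1 cards1 muln1 cH cK => <-.
  by rewrite mulnC.
have qz : (2 ^+ s = Posz q :> int)%R by rewrite /q -natz natrX.
have invK : {in K, forall g, g ^+ (2 ^ (2 * s)) = g^-1}.
  by apply: pow_inv; rewrite cK q2 addn1.
have invH : {in H, forall g, g ^+ (2 ^ s) = g^-1}.
  by apply: pow_inv; rewrite cH addn1.
have n1 : (Posz #|D| + Posz (#|H| - 1)%N * Posz (q + 1) - 2 * Posz 1 * Posz #|D| + Posz 1 ^+ 2 * Posz #|K|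
     = (2 ^+ s) ^+ 2 :> int)%R.
  rewrite qz cardD cH cK addnK !PoszD !PoszM; ring.
have n2 : (Posz #|H| * Posz (q + 1) - 2 * Posz 1 * Posz #|D| + Posz 1 ^+ 2 * Posz #|K| = 0 :> int)%R.
  rewrite cardD cH cK !PoszD !PoszM; ring.
have n3 : (Posz #|D| - Posz 1 * Posz #|K| = 1 * 2 ^+ s :> int)%R.
  rewrite qz cardD cK !PoszD !PoszM; ring.
have [y0 y0K ha] := @part _ G H K D (q + 1) 1 (2 * s) s 1%R abG sHG sKG HK1 HKG sDG hM oK
   (ltac:(lia)) invK n1 n2 n3 (or_introl erefl).
have cqK : coprime q #|K| by rewrite /q coprime_pexpl // coprime2n oK.
have cqH : coprime q #|H| by rewrite /q coprime_pexpl // coprime2n oH.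
have a_ne : forall y, y \in K -> y != y0 -> #|D :&: H :* y| = 1%N.
  move=> y yK ny; have := ha y yK; rewrite (negbTE ny) /= !mul0r addr0.
  by case.
have a0 : #|D :&: H :* y0| = (q + 1)%N.
  have := ha y0 y0K; rewrite eqxx /= !mul1r qz -PoszD addnC.
  by case.
have y01 : y0 = 1.
  have := normal_lemma abG sHG sKG HK1 HKG sDG normD y0K a_ne a0.
  have -> : (#|H| * (q + 1) * 2 = #|H| * q * 2 + #|H| * 1 * 2)%N by ring.
  move/cancel_pow => h; apply: (cop1 y0K h).
  by rewrite !coprimeMl cqK coprime2n oK cHK.
subst y0.
have HD : H \subset D.
  have : #|D :&: H| = #|H| by rewrite -{1}(rcoset1 H) a0 cH.
  move=> e; have : D :&: H == H by rewrite eqEcard subsetIr e leqnn.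
  by move/eqP <-; rewrite subsetIl.
have m1 : (Posz #|D| + Posz (#|K| - 1)%N * Posz (q + 1) - 2 * Posz (q + 1) * Posz #|D|
     + Posz (q + 1) ^+ 2 * Posz #|H| = (2 ^+ s) ^+ 2 :> int)%R.
  rewrite qz cardD cH cK addnK !PoszD !PoszM; ring.
have m2 : (Posz #|K| * Posz (q + 1) - 2 * Posz (q + 1) * Posz #|D|
     + Posz (q + 1) ^+ 2 * Posz #|H| = 0 :> int)%R.
  rewrite cardD cH cK !PoszD !PoszM; ring.
have m3 : (Posz #|D| - Posz (q + 1) * Posz #|H| = -1 * 2 ^+ s :> int)%R.
  rewrite qz cardD cH !PoszD !PoszM; ring.
have [y1 y1H hb] := @part _ G K H D (q + 1) (q + 1) s s (-1)%R abG sKG sHG KH1 KHG sDG hM oH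
   (ltac:(lia)) invH m1 m2 m3 (or_intror erefl).
have b_ne : forall y, y \in H -> y != y1 -> #|D :&: K :* y| = (q + 1)%N.
  move=> y yH ny; have := hb y yH; rewrite (negbTE ny) /= !mul0r addr0.
  by case.
have b0 : #|D :&: K :* y1| = 1%N.
  have := hb y1 y1H; rewrite eqxx /= !mul1r qz => h.
  have : Posz #|D :&: K :* y1| = Posz 1 by rewrite h PoszD; ring.
  by case.
have y11 : y1 = 1.
  have := normal_lemma abG sKG sHG KH1 KHG sDG normD y1H b_ne b0.
  have -> : (#|K| * (q + 1) * 2 = #|K| * q * 2 + #|K| * 1 * 2)%N by ring.
  move/esym/cancel_pow => h; apply: (cop1 y1H h).
  by rewrite !coprimeMl cqH coprime2n oH coprime_sym cHK.
subst y1.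
split => //.
- move=> x xG xH.
  have [y yK hy] := coset_uniq2 HK1 HKG xG.
  have xy : x \in H :* y by rewrite hy ?eqxx.
  rewrite (rcoset_eqP xy) a_ne //.
  by apply: contra xH => /eqP y1; rewrite -(rcoset1 H) -y1.
- apply/eqP; rewrite eq_sym eqEcard sub1set inE (subsetP HD 1 (group1 H)) group1 cards1.
  by rewrite -(rcoset1 K) b0.
- move=> x xG xK.
  have [y yH hy] := coset_uniq2 KH1 KHG xG.
  have xy : x \in K :* y by rewrite hy ?eqxx.
  rewrite (rcoset_eqP xy) b_ne //.
  by apply: contra xK => /eqP y1; rewrite -(rcoset1 K) -y1.
Qed.
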